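(* Let $K,G:[0,\infty)\to\mathbb{R}$ be continuous, let $f$ solve $f''+Kf=0$ with $f>0$ on $(0,\infty)$ and $\int_1^\infty f(t)^{-2}dt<\infty$, and let $m$ solve $m''+Gm=0$ with $m(0)=f(0)$, $m'(0)=f'(0)$. Suppose the support of $G-K$ is contained in a bounded interval $[a,b]\subset[1,\infty)$. If $\alpha(m)<1$, then $m(t)>0$ for all $t\in(0,\infty)$ and $$\int_1^\infty|f(t)^{-2}-m(t)^{-2}|\,dt\le\frac{(2+\alpha(m))\,\alpha(m)}{(1-\alpha(m))^2}\int_a^\infty f(t)^{-2}dt.$$
   Context: Notation: $\sigma(t):=m(t)/f(t)-1$ for $t>0$; $\alpha(m):=\sup_{t>0}|\sigma(t)|$. *)

(* Defs.v *)
From Stdlib Require Import Reals Lra.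
Open Scope R_scope.

Definition cont_nonneg (g : R -> R) : Prop :=
  forall t, 0 <= t -> forall eps, 0 < eps -> exists delta, 0 < delta /\
    forall s, 0 <= s -> Rabs (s - t) < delta -> Rabs (g s - g t) < eps.

Definition deriv_nonneg (g : R -> R) (t l : R) : Prop :=
  forall eps, 0 < eps -> exists delta, 0 < delta /\
    forall h, h <> 0 -> 0 <= t + h -> Rabs h < delta ->
      Rabs ((g (t + h) - g t) / h - l) < eps.

Definition solves_ode (k y y' : R -> R) : Prop :=
  forall t, 0 <= t -> deriv_nonneg y t (y' t) /\ deriv_nonneg y' t (- (k t * y t)).

Definition RInt_is (g : R -> R) (a b v : R) : Prop :=
  exists pr : Riemann_integrable g a b, RiemannInt pr = v.

Definition improper_int (g : R -> R) (a L : R) : Prop :=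
  (forall T, a <= T -> exists v, RInt_is g a T v) /\
  (forall eps, 0 < eps -> exists M, forall T v, M <= T -> a <= T ->
      RInt_is g a T v -> Rabs (v - L) < eps).

Definition sigma (m f : R -> R) (t : R) : R := m t / f t - 1.

Definition is_alpha (m f : R -> R) (alpha : R) : Prop :=
  is_lub (fun x => exists t, 0 < t /\ x = Rabs (sigma m f t)) alpha.

(* Main.v *)
Require Import Defs.
From Stdlib Require Import Reals Lra Classical.
Open Scope R_scope.

Definition rcont (g : R -> R) (t : R) : Prop :=
  forall eps, 0 < eps -> exists delta, 0 < delta /\
    forall s, 0 <= s -> Rabs (s - t) < delta -> Rabs (g s - g t) < eps.

Lemma deriv_rcont g t l : deriv_nonneg g t l -> rcont g t.
Proof.
  intros H eps Heps.
  destruct (H 1 Rlt_0_1) as [d1 [Hd1 H1]].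
  assert (Hl : 0 < Rabs l + 1) by (pose proof (Rabs_pos l); lra).
  exists (Rmin d1 (eps / (Rabs l + 1))). split.
  { apply Rmin_pos; [lra| apply Rdiv_lt_0_compat; lra]. }
  intros s Hs Hst.
  destruct (Req_dec s t) as [->|Hne].
  { unfold Rminus; rewrite Rplus_opp_r, Rabs_R0; lra. }
  assert (Hh : s - t <> 0) by lra.
  pose proof (Rmin_l d1 (eps / (Rabs l + 1))).
  pose proof (Rmin_r d1 (eps / (Rabs l + 1))).
  specialize (H1 (s - t) Hh).
  replace (t + (s - t)) with s in H1 by ring.
  specialize (H1 Hs ltac:(lra)).
  set (q := (g s - g t) / (s - t)) in *.
  assert (Hq : g s - g t = q * (s - t)) by (unfold q; field; auto).
  rewrite Hq, Rabs_mult.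
  assert (Rabs q < Rabs l + 1).
  { pose proof (Rabs_triang (q - l) l). replace (q - l + l) with q in H3 by ring. lra. }
  assert (Rabs (s - t) < eps / (Rabs l + 1)) by lra.
  assert (Hpos : 0 <= Rabs (s - t)) by apply Rabs_pos.
  apply Rle_lt_trans with ((Rabs l + 1) * Rabs (s - t)).
  { apply Rmult_le_compat_r; lra. }
  apply Rmult_lt_reg_r with (/ (Rabs l + 1)).
  { apply Rinv_0_lt_compat; lra. }
  replace ((Rabs l + 1) * Rabs (s - t) * / (Rabs l + 1)) with (Rabs (s - t)) by (field; lra).
  exact H4.
Qed.

Lemma rcont_ext g t : 0 <= t -> rcont g t -> continuity_pt (fun x => g (Rmax 0 x)) t.
Proof.
  intros Ht H eps Heps.
  destruct (H eps Heps) as [d [Hd Hd']].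
  exists d; split; [exact Hd|].
  intros x [_ Hx]. simpl in *. unfold R_dist in *.
  rewrite (Rmax_right 0 t Ht).
  apply Hd'.
  - apply Rmax_l.
  - destruct (Rle_dec 0 x).
    + rewrite Rmax_right; auto.
    + rewrite Rmax_left by lra.
      apply Rle_lt_trans with (Rabs (x - t)); auto.
      rewrite !Rabs_left1 by lra. lra.
Qed.

Lemma deriv_ext g t l : 0 < t -> deriv_nonneg g t l ->
  derivable_pt_lim (fun x => g (Rmax 0 x)) t l.
Proof.
  intros Ht H eps Heps.
  destruct (H eps Heps) as [d [Hd Hd']].
  assert (Hp : 0 < Rmin d t) by (apply Rmin_pos; lra).
  exists (mkposreal _ Hp). intros h Hh Hha. simpl in Hha.
  pose proof (Rmin_l d t). pose proof (Rmin_r d t).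
  assert (Hb : - t < h) by (pose proof (Rabs_def2 h _ (Rlt_le_trans _ _ _ Hha H1)) ; lra).
  rewrite (Rmax_right 0 t) by lra.
  rewrite (Rmax_right 0 (t + h)) by lra.
  apply Hd'; auto; lra.
Qed.

Lemma deriv_lim g t l : 0 < t -> deriv_nonneg g t l -> derivable_pt_lim g t l.
Proof.
  intros Ht H eps Heps.
  destruct (H eps Heps) as [d [Hd Hd']].
  assert (Hp : 0 < Rmin d t) by (apply Rmin_pos; lra).
  exists (mkposreal _ Hp). intros h Hh Hha. simpl in Hha.
  pose proof (Rmin_l d t). pose proof (Rmin_r d t).
  assert (Hb : - t < h) by (pose proof (Rabs_def2 h _ (Rlt_le_trans _ _ _ Hha H1)) ; lra).
  apply Hd'; auto; lra.
Qed.

Lemma dlim_eq f x l1 l2 : derivable_pt_lim f x l1 -> l1 = l2 -> derivable_pt_lim f x l2.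
Proof. intros H ->; exact H. Qed.

Lemma uniq (K G f f' m m' : R -> R) (a : R) :
  cont_nonneg K -> solves_ode K f f' -> solves_ode G m m' ->
  m 0 = f 0 -> m' 0 = f' 0 -> 0 < a ->
  (forall t, 0 <= t -> t < a -> G t = K t) ->
  forall t, 0 < t -> t <= a -> m t = f t.
Proof.
  intros HK Hf Hm H0 H0' Ha HGK t Ht Hta.
  set (Kx := fun x => K (Rmax 0 x)).
  assert (HKc : forall c, 0 <= c <= a -> continuity_pt (fun x => Rabs (1 - Kx x)) c).
  { intros c Hc. apply (continuity_pt_comp (fun x => 1 - Kx x) Rabs).
    - apply continuity_pt_minus.
      + apply continuity_pt_const. intros u v; reflexivity.
      + apply rcont_ext; [lra|]. intros e He; apply (HK c); lra.
    - apply Rcontinuity_abs. }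
  destruct (continuity_ab_maj _ 0 a (Rlt_le _ _ Ha) HKc) as [Mx [HMx _]].
  set (C0 := Rabs (1 - Kx Mx)).
  set (M := fun x => m (Rmax 0 x)).
  set (F := fun x => f (Rmax 0 x)).
  set (M' := fun x => m' (Rmax 0 x)).
  set (F' := fun x => f' (Rmax 0 x)).
  set (Ex := comp exp (mult_real_fct (- C0) id)).
  set (Phi := ((((M - F) * (M - F)) + ((M' - F') * (M' - F'))) * Ex)%F).
  assert (HPhi : forall x, Phi x = ((M x - F x) * (M x - F x) + (M' x - F' x) * (M' x - F' x)) * exp (- C0 * x)).
  { intros x; reflexivity. }
  set (lval := fun c =>
     (((m' c - f' c) * (M c - F c) + (M c - F c) * (m' c - f' c)) +
      ((- (G c * m c) - - (K c * f c)) * (M' c - F' c) + (M' c - F' c) * (- (G c * m c) - - (K c * f c))))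
     * Ex c + ((M c - F c) * (M c - F c) + (M' c - F' c) * (M' c - F' c)) * (exp (mult_real_fct (- C0) id c) * (- C0 * 1))).
  assert (HD : forall c, 0 < c < t -> derivable_pt_lim Phi c (lval c)).
  { intros c Hc.
    assert (Hc0 : 0 <= c) by lra.
    destruct (Hf c Hc0) as [Df Df']. destruct (Hm c Hc0) as [Dm Dm'].
    apply deriv_ext in Df, Df', Dm, Dm'; try lra.
    unfold Phi. eapply dlim_eq.
    { apply derivable_pt_lim_mult.
    - apply derivable_pt_lim_plus; apply derivable_pt_lim_mult; apply derivable_pt_lim_minus; eassumption.
    - apply derivable_pt_lim_comp.
      + apply derivable_pt_lim_scal. apply derivable_pt_lim_id.
      + apply derivable_pt_lim_exp. }
    unfold lval. reflexivity. }
  assert (HC : forall c, 0 <= c <= t -> continuity_pt Phi c).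
  { intros c Hc.
    assert (Hc0 : 0 <= c) by lra.
    destruct (Hf c Hc0) as [Df Df']. destruct (Hm c Hc0) as [Dm Dm'].
    apply deriv_rcont, rcont_ext in Df, Df', Dm, Dm'; try lra.
    unfold Phi.
    apply continuity_pt_mult.
    - apply continuity_pt_plus; apply continuity_pt_mult; apply continuity_pt_minus; assumption.
    - apply continuity_pt_comp.
      + apply continuity_pt_scal. apply derivable_continuous_pt, derivable_pt_id.
      + apply derivable_continuous_pt, derivable_pt_exp. }
  assert (pr2 : forall c, 0 < c < t -> derivable_pt Phi c).
  { intros c Hc. exists (lval c). apply HD; auto. }
  destruct (MVT id Phi 0 t (fun c _ => derivable_pt_id c) pr2 Ht
     (fun c _ => derivable_continuous_pt _ _ (derivable_pt_id c)) HC) as [c [P Heq]].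
  rewrite derive_pt_id in Heq.
  assert (Hder : derive_pt Phi c (pr2 c P) = lval c).
  { apply derive_pt_eq_0. apply HD; auto. }
  rewrite Hder in Heq.
  assert (Hl : lval c <= 0).
  { destruct P as [Pc1 Pc2].
    assert (Hc0 : 0 < c) by lra.
    unfold lval, Ex, comp, mult_real_fct, id.
    rewrite (HGK c) by lra.
    unfold M, F, M', F'. rewrite (Rmax_right 0 c) by lra.
    assert (Hk : Rabs (1 - K c) <= C0).
    { pose proof (HMx c ltac:(lra)). unfold Kx in H. rewrite (Rmax_right 0 c) in H by lra. exact H. }
    pose proof (exp_pos (- C0 * c)) as He.
    set (e := exp (- C0 * c)) in *.
    set (w := m c - f c). set (w' := m' c - f' c).
    replace (- (K c * m c) - - (K c * f c)) with (- K c * w) by (unfold w; ring).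
    assert (H2 : 2 * ((1 - K c) * (w * w')) <= C0 * (w * w + w' * w')).
    { apply Rle_trans with (2 * Rabs ((1 - K c) * (w * w'))).
      { pose proof (Rle_abs ((1 - K c) * (w * w'))). lra. }
      rewrite Rabs_mult.
      assert (Hww : 2 * Rabs (w * w') <= w * w + w' * w').
      { rewrite Rabs_mult. pose proof (Rabs_pos w). pose proof (Rabs_pos w').
        assert (E1 : w * w = Rabs w * Rabs w) by (rewrite <- Rabs_mult; rewrite Rabs_right; nra).
        assert (E2 : w' * w' = Rabs w' * Rabs w') by (rewrite <- Rabs_mult; rewrite Rabs_right; nra).
        rewrite E1, E2. pose proof (Rle_0_sqr (Rabs w - Rabs w')). unfold Rsqr in *. nra. }
      pose proof (Rabs_pos (1 - K c)). pose proof (Rabs_pos (w * w')). nra. }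
    nra. }
  assert (HP0 : Phi 0 = 0).
  { rewrite HPhi. unfold M, F, M', F'. rewrite Rmax_left by lra. rewrite H0, H0'. ring. }
  rewrite HPhi in Heq. rewrite HP0 in Heq.
  unfold M, F, M', F' in Heq. rewrite (Rmax_right 0 t) in Heq by lra.
  pose proof (exp_pos (- C0 * t)).
  destruct P. unfold id in Heq.
  assert (Hx : t * lval c <= 0) by nra.
  assert (((m t - f t) * (m t - f t) + (m' t - f' t) * (m' t - f' t)) * exp (- C0 * t) <= 0) by nra.
  assert ((m t - f t) * (m t - f t) + (m' t - f' t) * (m' t - f' t) <= 0).
  { destruct (Rle_dec ((m t - f t) * (m t - f t) + (m' t - f' t) * (m' t - f' t)) 0); auto. nra. }
  destruct (Req_dec (m t) (f t)) as [|Hne]; auto. exfalso.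
  assert (Hd : m t - f t <> 0) by lra.
  pose proof (Rsqr_pos_lt _ Hd). pose proof (Rle_0_sqr (m' t - f' t)). unfold Rsqr in *. lra.
Qed.

Lemma ri_uniq g x y v1 v2 : RInt_is g x y v1 -> RInt_is g x y v2 -> v1 = v2.
Proof. intros [p1 <-] [p2 <-]. apply RiemannInt_P5. Qed.

Lemma ri_split g x y z v : RInt_is g x z v -> x <= y <= z ->
  exists v1 v2, RInt_is g x y v1 /\ RInt_is g y z v2 /\ v1 + v2 = v.
Proof.
  intros [p <-] Hy.
  pose (p1 := RiemannInt_P22 p Hy). pose (p2 := RiemannInt_P23 p Hy).
  exists (RiemannInt p1), (RiemannInt p2). split; [exists p1; auto|].
  split; [exists p2; auto|]. apply RiemannInt_P26.
Qed.

Lemma ri_mono g1 g2 x y v1 v2 : x <= y -> (forall t, x < t < y -> g1 t <= g2 t) ->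
  RInt_is g1 x y v1 -> RInt_is g2 x y v2 -> v1 <= v2.
Proof. intros Hxy H [p1 <-] [p2 <-]. apply RiemannInt_P19; auto. Qed.

Lemma ri_cte c x y : RInt_is (fct_cte c) x y (c * (y - x)).
Proof. exists (RiemannInt_P14 x y c). apply RiemannInt_P15. Qed.

Lemma ri_nonneg g x y v : x <= y -> (forall t, x < t < y -> 0 <= g t) ->
  RInt_is g x y v -> 0 <= v.
Proof.
  intros Hxy H Hv. replace 0 with (0 * (y - x)) by ring.
  apply (ri_mono (fct_cte 0) g x y); auto. apply ri_cte.
Qed.

Lemma ri_zero g x y v : x <= y -> (forall t, x < t < y -> g t = 0) ->
  RInt_is g x y v -> v = 0.
Proof.
  intros Hxy H Hv. apply Rle_antisym.
  - replace 0 with (0 * (y - x)) by ring.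
    apply (ri_mono g (fct_cte 0) x y); auto.
    + intros t Ht; rewrite H; auto; unfold fct_cte; lra.
    + apply ri_cte.
  - apply (ri_nonneg g x y); auto. intros t Ht; rewrite H; auto; lra.
Qed.

Lemma ri_scal g x y v C : x <= y -> RInt_is g x y v -> RInt_is (fun t => C * g t) x y (C * v).
Proof.
  intros Hxy [p <-].
  pose (p0 := RiemannInt_P14 x y 0).
  pose (p3 := RiemannInt_P10 C p0 p).
  exists (@Riemann_integrable_scal g x y C p).
  rewrite (RiemannInt_P18 (@Riemann_integrable_scal g x y C p) p3 Hxy).
  - rewrite (RiemannInt_P13 p0 p p3). rewrite RiemannInt_P15. ring.
  - intros t _. unfold fct_cte. ring.
Qed.

Lemma ri_refl g x : RInt_is g x x 0.
Proof. exists (RiemannInt_P7 g x). apply RiemannInt_P9. Qed.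

Theorem lemma2p5 (K G f f' m m' : R -> R) (a b alpha : R) :
  cont_nonneg K -> cont_nonneg G ->
  solves_ode K f f' ->
  (forall t, 0 < t -> 0 < f t) ->
  (exists I, improper_int (fun t => / (f t) ^ 2) 1 I) ->
  solves_ode G m m' ->
  m 0 = f 0 -> m' 0 = f' 0 ->
  1 <= a -> a <= b ->
  (forall t, 0 <= t -> (t < a \/ b < t) -> G t = K t) ->
  is_alpha m f alpha -> alpha < 1 ->
  (forall t, 0 < t -> 0 < m t) /\
  exists L La,
    improper_int (fun t => Rabs (/ (f t) ^ 2 - / (m t) ^ 2)) 1 L /\
    improper_int (fun t => / (f t) ^ 2) a La /\
    L <= (2 + alpha) * alpha / (1 - alpha) ^ 2 * La.
Proof.
  intros HK HG Hf Hfp [I [HIex HIlim]] Hm H0 H0' H1a Hab HGK [Hub _] Hal.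
  assert (Hs : forall t, 0 < t -> Rabs (m t / f t - 1) <= alpha).
  { intros t Ht. apply Hub. exists t. split; auto. }
  assert (Ha0 : 0 <= alpha).
  { pose proof (Hs 1 Rlt_0_1). pose proof (Rabs_pos (m 1 / f 1 - 1)). lra. }
  assert (Hmp : forall t, 0 < t -> 0 < m t).
  { intros t Ht. pose proof (Hs t Ht) as H. pose proof (Hfp t Ht).
    pose proof (Rabs_def2 _ _ (Rle_lt_trans _ _ _ H Hal)) as [_ Hr].
    assert (0 < m t / f t) by lra.
    replace (m t) with (m t / f t * f t) by (field; lra). nra. }
  split; [exact Hmp|].
  set (C := (2 + alpha) * alpha / (1 - alpha) ^ 2).
  set (h := fun t => / (f t) ^ 2).
  set (g := fun t => Rabs (/ (f t) ^ 2 - / (m t) ^ 2)).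
  assert (HC0 : 0 <= C).
  { unfold C. apply Rmult_le_pos; [nra|]. apply Rlt_le, Rinv_0_lt_compat. nra. }
  assert (Hh0 : forall t, 0 < t -> 0 <= h t).
  { intros t Ht. unfold h. pose proof (Hfp t Ht). apply Rlt_le, Rinv_0_lt_compat. nra. }
  assert (Hg0 : forall t, 0 <= g t) by (intros; apply Rabs_pos).
  assert (Hpt : forall t, 0 < t -> g t <= C * h t).
  { intros t Ht. unfold g, h, C.
    pose proof (Hfp t Ht) as Hx. pose proof (Hmp t Ht) as Hy.
    pose proof (Hs t Ht) as Hr.
    set (r := m t / f t) in *.
    assert (Hmr : m t = r * f t) by (unfold r; field; lra).
    assert (Hr0 : 0 < r) by (rewrite Hmr in Hy; nra).
    rewrite Hmr.
    replace (/ f t ^ 2 - / (r * f t) ^ 2) with ((r * r - 1) / (r * r) * / f t ^ 2) by (field; lra).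
    rewrite Rabs_mult, (Rabs_right (/ f t ^ 2)) by (apply Rle_ge, Rlt_le, Rinv_0_lt_compat; nra).
    apply Rmult_le_compat_r; [apply Rlt_le, Rinv_0_lt_compat; nra|].
    unfold Rdiv; rewrite Rabs_mult, Rabs_inv. rewrite (Rabs_right (r * r)) by nra.
    assert (Hr1 : Rabs (r * r - 1) <= (2 + alpha) * alpha).
    { replace (r * r - 1) with ((r - 1) * (r + 1)) by ring. rewrite Rabs_mult.
      rewrite (Rabs_right (r + 1)) by lra.
      pose proof (Rabs_def2 _ _ (Rle_lt_trans _ _ _ Hr (Rlt_plus_1 alpha))).
      pose proof (Rabs_pos (r - 1)).
      assert (r + 1 <= 2 + alpha) by (pose proof (Rle_abs (r - 1)); lra).
      nra. }
    assert (Hrr : (1 - alpha) ^ 2 <= r * r).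
    { pose proof (Rabs_def2 _ _ (Rle_lt_trans _ _ _ Hr (Rlt_plus_1 alpha))).
      assert (1 - alpha <= r) by (pose proof (Rle_abs (- (r - 1))) as Hq; rewrite Rabs_Ropp in Hq; lra).
      nra. }
    unfold Rdiv. apply Rmult_le_compat; [apply Rabs_pos| apply Rlt_le, Rinv_0_lt_compat; nra | exact Hr1 |].
    apply Rinv_le_contravar; [nra | exact Hrr]. }
  assert (Heq : forall t, 0 < t -> t <= a -> g t = 0).
  { intros t Ht Hta. unfold g.
    assert (HG' : forall s, 0 <= s -> s < a -> G s = K s) by (intros s Hs0 Hsa; apply HGK; auto).
    rewrite (uniq K G f f' m m' a HK Hf Hm H0 H0' ltac:(lra) HG' t Ht Hta).
    unfold Rminus; rewrite Rplus_opp_r. apply Rabs_R0. }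
  assert (Hgc : forall t, 0 < t -> continuity_pt g t).
  { intros t Ht.
    assert (Cf : continuity_pt f t).
    { apply derivable_continuous_pt. exists (f' t). apply deriv_lim; auto. apply Hf; lra. }
    assert (Cm : continuity_pt m t).
    { apply derivable_continuous_pt. exists (m' t). apply deriv_lim; auto. apply Hm; lra. }
    pose proof (Hfp t Ht). pose proof (Hmp t Ht).
    unfold g. apply (continuity_pt_comp (fun x => / f x ^ 2 - / m x ^ 2) Rabs); [|apply Rcontinuity_abs].
    apply continuity_pt_minus.
    - apply (continuity_pt_inv (fun x => f x ^ 2)); [|simpl; nra].
      apply (continuity_pt_comp f (fun x => x ^ 2)); auto.
      apply derivable_continuous_pt, derivable_pt_pow.
    - apply (continuity_pt_inv (fun x => m x ^ 2)); [|simpl; nra].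
      apply (continuity_pt_comp m (fun x => x ^ 2)); auto.
      apply derivable_continuous_pt, derivable_pt_pow. }
  assert (Hgex : forall T, 1 <= T -> exists v, RInt_is g 1 T v).
  { intros T HT. exists (RiemannInt (continuity_implies_RiemannInt HT (fun x Hx => Hgc x ltac:(lra)))).
    eexists; reflexivity. }
  destruct (HIex a H1a) as [v1a Hv1a].
  set (La := I - v1a).
  assert (Hhex : forall T, a <= T -> exists v, RInt_is h a T v).
  { intros T HT. destruct (HIex T ltac:(lra)) as [v Hv].
    destruct (ri_split _ _ _ _ _ Hv (conj H1a HT)) as [v1 [v2 [_ [Hv2 _]]]]. eauto. }
  assert (HhLa : forall eps, 0 < eps -> exists M, forall T v, M <= T -> a <= T ->
      RInt_is h a T v -> Rabs (v - La) < eps).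
  { intros eps Heps. destruct (HIlim eps Heps) as [M HM]. exists M.
    intros T v HMT HaT Hv. destruct (HIex T ltac:(lra)) as [v' Hv'].
    destruct (ri_split _ _ _ _ _ Hv' (conj H1a HaT)) as [w1 [w2 [Hw1 [Hw2 Hs12]]]].
    rewrite (ri_uniq _ _ _ _ _ Hw1 Hv1a) in Hs12. rewrite (ri_uniq _ _ _ _ _ Hw2 Hv) in Hs12.
    specialize (HM T v' HMT ltac:(lra) Hv'). unfold La. 
    replace (v - (I - v1a)) with (v' - I) by lra. exact HM. }
  assert (HleLa : forall T v, a <= T -> RInt_is h a T v -> v <= La).
  { intros T v HaT Hv. destruct (Rle_dec v La) as [|Hn]; auto. exfalso.
    destruct (HhLa (v - La) ltac:(lra)) as [M HM].
    set (T' := Rmax M T).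
    assert (HT' : T <= T') by apply Rmax_r. assert (HMT' : M <= T') by apply Rmax_l.
    destruct (Hhex T' ltac:(lra)) as [v' Hv'].
    destruct (ri_split _ _ _ _ _ Hv' (conj HaT HT')) as [w1 [w2 [Hw1 [Hw2 Hs12]]]].
    rewrite (ri_uniq _ _ _ _ _ Hw1 Hv) in Hs12.
    assert (0 <= w2) by (apply (ri_nonneg h T T'); auto; intros t Ht; apply Hh0; lra).
    specialize (HM T' v' HMT' ltac:(lra) Hv').
    pose proof (Rle_abs (v' - La)). lra. }
  assert (HLa0 : 0 <= La) by (apply (HleLa a 0); [lra| apply ri_refl]).
  set (S := fun v => exists T, 1 <= T /\ RInt_is g 1 T v).
  assert (HSub : forall v, S v -> v <= C * La).
  { intros v [T [HT Hv]].
    destruct (Rle_dec T a) as [HTa|HTa].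
    - rewrite (ri_zero g 1 T v HT) by (auto; intros t Ht; apply Heq; lra). nra.
    - destruct (ri_split _ _ _ _ _ Hv (conj H1a (Rlt_le _ _ (Rnot_le_lt _ _ HTa)))) as [w1 [w2 [Hw1 [Hw2 Hs12]]]].
      rewrite (ri_zero g 1 a w1 H1a) in Hs12 by (auto; intros t Ht; apply Heq; lra).
      destruct (Hhex T ltac:(lra)) as [w Hw].
      assert (w2 <= C * w).
      { apply (ri_mono g (fun t => C * h t) a T); auto; [lra| |].
        - intros t Ht; apply Hpt; lra.
        - apply ri_scal; auto; lra. }
      pose proof (HleLa T w ltac:(lra) Hw). nra. }
  assert (HSb : bound S) by (exists (C * La); intros v Hv; auto).
  assert (HSne : exists v, S v) by (exists 0; exists 1; split; [lra| apply ri_refl]).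
  destruct (completeness S HSb HSne) as [L [HLub HLlub]].
  exists L, La. split; [|split].
  - split; [exact Hgex|].
    intros eps Heps.
    assert (Hex0 : exists v0, S v0 /\ L - eps < v0).
    { apply Classical_Prop.NNPP. intros Hn.
      assert (L <= L - eps); [|lra].
      apply HLlub. intros v Hv. destruct (Rle_dec v (L - eps)) as [|Hn2]; auto.
      exfalso; apply Hn; exists v; split; auto; lra. }
    destruct Hex0 as [v0 [[T0 [HT0 Hv0]] Hv0L]].
    exists T0. intros T v HT HT1 Hv.
    destruct (ri_split _ _ _ _ _ Hv (conj HT0 HT)) as [w1 [w2 [Hw1 [Hw2 Hs12]]]].
    rewrite (ri_uniq _ _ _ _ _ Hw1 Hv0) in Hs12.
    assert (0 <= w2) by (apply (ri_nonneg g T0 T); auto).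
    assert (v <= L) by (apply HLub; exists T; auto).
    rewrite Rabs_left1 by lra. lra.
  - split; [exact Hhex | exact HhLa].
  - apply HLlub. intros v Hv. apply HSub; auto.
Qed.
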